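(* Let $(X,d,A)$ be a metric pair and $p\in[1,\infty)$. If $(X,d)$ is complete, then $(\overline{D}_p(X,A),W_p)$ is complete.
   Context: A metric on $X$ is a map $d:X\times X\to[0,\infty]$ with $d(x,x)=0$, symmetry and the triangle inequality (infinite distances allowed, $d(x,y)=0$ need not imply $x=y$, so limits need not be unique); complete means every Cauchy sequence converges. A metric pair $(X,d,A)$ is such a space with a closed subset $A$. Write $d(x,A)=\inf_{a\in A}d(x,a)$, $A^\delta=\{x:d(x,A)<\delta\}$ for $\delta\in(0,\infty]$. $\overline{D}(X,A)$ is the set of countable formal sums $\hat\alpha=\sum_{i\in I}x_i$ of points of $X\setminus A$ (repetitions allowed); $0$ the empty sum. A matching of $\hat\alpha=\sum_{i\in I}x_i$, $\hat\beta=\sum_{j\in J}y_j$ is a formal sum $\sum_{k\in K}(x_k,y_{\varphi(k)})+\sum_{i\in I\setminus K}(x_i,z_i)+\sum_{j\in J\setminus\varphi(K)}(w_j,y_j)$ with $K\subset I$, $\varphi$ injective, $z_i,w_j\in A$; its $p$-cost is the $\ell^p$ norm of the distances of paired points; $W_p$ is the infimum of $p$-costs. $u_\delta(\alpha)$, $\ell_\delta(\alpha)$ are the restrictions of $\hat\alpha$ to $X\setminus A^\delta$ and to $A^\delta\setminus A$, and $\overline{D}_p(X,A)=\{\alpha: |u_\infty(\alpha)|<\infty,\ W_p(\ell_\infty(\alpha),0)<\infty\}$. *)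

(* Defs.v *)
From HB Require Import structures.
From mathcomp Require Import all_boot all_order all_algebra.
From mathcomp Require Import all_classical all_reals all_analysis.
Set Implicit Arguments. Unset Strict Implicit. Unset Printing Implicit Defensive.
Import Order.TTheory GRing.Theory Num.Theory.
Local Open Scope classical_set_scope.
Local Open Scope ereal_scope.

Section Defs.
Context {R : realType} {X : Type}.

(* An extended pseudometric d : X -> X -> [0, +oo] (d x y = 0 need not imply x = y). *)
Definition is_metric (d : X -> X -> \bar R) : Prop :=
  [/\ (forall x y, 0 <= d x y),
      (forall x, d x x = 0),
      (forall x y, d x y = d y x) &
      (forall x y z, d x z <= d x y + d y z)].

Definition cauchy_seq {T : Type} (D : T -> T -> \bar R) (u : nat -> T) : Prop :=
  forall eps : R, (0 < eps)%R ->
    exists N, forall m n, (N <= m)%N -> (N <= n)%N -> D (u m) (u n) < eps%:E.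

Definition converges_to {T : Type} (D : T -> T -> \bar R) (u : nat -> T) (l : T) : Prop :=
  forall eps : R, (0 < eps)%R ->
    exists N, forall n, (N <= n)%N -> D (u n) l < eps%:E.

Definition complete (d : X -> X -> \bar R) : Prop :=
  forall u : nat -> X, cauchy_seq d u -> exists l, converges_to d u l.

Definition dist_set (d : X -> X -> \bar R) (x : X) (A : set X) : \bar R :=
  ereal_inf [set d x a | a in A].

Definition closed_in (d : X -> X -> \bar R) (A : set X) : Prop :=
  forall x, (forall eps : R, (0 < eps)%R -> exists2 a, A a & d x a < eps%:E) -> A x.

(* A countable formal sum sum_{i in I} x_i, with I a subset of nat. *)
Record fsum := FSum { fidx : set nat ; fpt : nat -> X }.

Definition in_Dbar (A : set X) (a : fsum) : Prop :=
  forall i, fidx a i -> ~ A (fpt a i).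

(* The empty formal sum 0 (the point function is irrelevant; we reuse that of
   a given sum so as not to need X inhabited). *)
Definition fsum_zero (a : fsum) : fsum := FSum set0 (fpt a).

Definition restrict (a : fsum) (S : set X) : fsum :=
  FSum [set i | fidx a i /\ S (fpt a i)] (fpt a).

(* A matching between a = sum_{i in I} x_i and b = sum_{j in J} y_j:
   K subset of I, phi : K -> J injective, z_i in A for i in I \ K,
   w_j in A for j in J \ phi(K). *)
Record matching_data := MData {
  mK : set nat ; mphi : nat -> nat ; mz : nat -> X ; mw : nat -> X }.

Definition is_matching (A : set X) (a b : fsum) (m : matching_data) : Prop :=
  [/\ mK m `<=` fidx a,
      (forall k, mK m k -> fidx b (mphi m k)),
      {in mK m &, injective (mphi m)},
      (forall i, fidx a i -> ~ mK m i -> A (mz m i)) &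
      (forall j, fidx b j -> ~ (mphi m @` mK m) j -> A (mw m j))].

Definition pcost (d : X -> X -> \bar R) (p : R) (a b : fsum) (m : matching_data)
  : \bar R :=
  poweR
   ((esum (mK m) (fun k => poweR (d (fpt a k) (fpt b (mphi m k))) p))
    + (esum (fidx a `\` mK m) (fun i => poweR (d (fpt a i) (mz m i)) p))
    + (esum (fidx b `\` (mphi m @` mK m)) (fun j => poweR (d (mw m j) (fpt b j)) p)))
   (p^-1)%R.

Definition Wp (d : X -> X -> \bar R) (A : set X) (p : R) (a b : fsum) : \bar R :=
  ereal_inf [set pcost d p a b m | m in is_matching A a b].

Definition nbhd_set (d : X -> X -> \bar R) (A : set X) (delta : \bar R) : set X :=
  [set x | dist_set d x A < delta].

Definition u_part (d : X -> X -> \bar R) (A : set X) (delta : \bar R) (a : fsum) :=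
  restrict a (~` nbhd_set d A delta).
Definition l_part (d : X -> X -> \bar R) (A : set X) (delta : \bar R) (a : fsum) :=
  restrict a (nbhd_set d A delta `\` A).

Definition Dp (d : X -> X -> \bar R) (A : set X) (p : R) : set fsum :=
  [set a | in_Dbar A a
         /\ finite_set (fidx (u_part d A +oo a))
         /\ Wp d A p (l_part d A +oo a) (fsum_zero (l_part d A +oo a)) < +oo].

End Defs.

(* Main.v *)
Require Import Defs.
From HB Require Import structures.
From mathcomp Require Import all_boot all_order all_algebra.
From mathcomp Require Import all_classical all_reals all_analysis.
From mathcomp Require Import lra zify.
Import Order.TTheory GRing.Theory Num.Theory.
Local Open Scope classical_set_scope.
Local Open Scope ereal_scope.
Lemma esum_swap {R : realType} (T1 T2 : choiceType) (I : set T1) (J : set T2)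
  (f : T1 -> T2 -> \bar R) : (forall i j, 0 <= f i j) ->
  esum I (fun i => esum J (f i)) = esum J (fun j => esum I (fun i => f i j)).
Proof.
move=> f0; rewrite (esum_esum (J := fun=> J)) //.
rewrite (esum_esum (J := fun=> I)) //.
rewrite (reindex_esum (I `*`` fun=> J) _ (fun x => (x.2, x.1))) //.
split=> //=.
- by move=> [i j] [/=].
- by move=> [i1 i2] [j1 j2] /= _ _ [] -> ->.
- by move=> [i1 i2] [Pi1 Qi2] /=; exists (i2, i1).
Qed.
Section Num.
Context {R : realType}.

Lemma half_small (e : R) : (0 < e)%R -> exists n, ((2:R)^-1 ^+ n < e)%R.
Proof.
move=> e0; exists (Num.bound (e^-1)).
set n := Num.bound _.
have h1 : (e^-1 < n%:R)%R by apply: archi_boundP; rewrite invr_ge0 ltW.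
have h2 : (n%:R <= (2:R) ^+ n)%R.
  by rewrite -natrX ler_nat ltnW // ltn_expl.
rewrite exprVn -invf_plt ?exprn_gt0 //; last first.
  by rewrite posrE exprn_gt0.
exact: (lt_le_trans h1 h2).
Qed.

Lemma esum_geo : esum setT (fun k : nat => (((2:R)^-1) ^+ k.+1)%:E) = 1.
Proof.
rewrite -nneseries_esumT; last by move=> k; rewrite lee_fin exprn_ge0 // invr_ge0.
have := @cvg_geometric_eseries_half R 1 0.
rewrite expr0 divr1.
have -> : (fun k => (1 / (2 ^ (k + 1))%:R)%:E) = (fun k : nat => (((2:R)^-1) ^+ k.+1)%:E).
  by apply/funext => k; rewrite addn1 natrX exprVn div1r.
by move/cvg_lim => <-.
Qed.

End Num.
Section Basic.
Context {R : realType}.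

Lemma esum_ge1 (T : choiceType) (I : set T) (a : T -> \bar R) i :
  I i -> (forall j, I j -> 0 <= a j) -> a i <= esum I a.
Proof.
move=> Ii a0; apply: esum_ge; exists [set i].
  by split; [exact: finite_set1| move=> j ->].
by rewrite fsbig_set1.
Qed.

Lemma esum_sub (T : choiceType) (I J : set T) (a : T -> \bar R) :
  I `<=` J -> (forall j, J j -> 0 <= a j) -> esum I a <= esum J a.
Proof.
move=> IJ a0; rewrite [leLHS]esum_mkcond [leRHS]esum_mkcond; apply: le_esum => i _.
case: ifPn => [/[!inE] /IJ Ji|_]; first by rewrite ifT ?inE.
by case: ifPn => // /[!inE] /a0.
Qed.

Lemma esum_le_scale (T : choiceType) (J : set T) (g : T -> \bar R) (c : R) :
  (0 <= c)%R -> (forall j, 0 <= g j) ->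
  esum J (fun j => c%:E * g j) <= c%:E * esum J g.
Proof.
move=> c0 g0; apply: ge_ereal_sup => _ [F [finF FJ] <-] /=.
rewrite -ge0_mule_fsumr //.
apply: lee_wpmul2l; first by rewrite lee_fin.
by apply: ereal_sup_ubound; exists F.
Qed.

Lemma esum_inj_le (T T' : choiceType) (I : set T) (J : set T') (Q : set T)
   (h : T -> T') (f : T -> \bar R) (g : T' -> \bar R) :
  (forall o, I o -> 0 <= f o) -> (forall j, J j -> 0 <= g j) ->
  (forall o, I o -> ~ Q o -> f o = 0) ->
  set_inj (I `&` Q) h ->
  (forall o, I o -> Q o -> J (h o) /\ f o <= g (h o)) ->
  esum I f <= esum J g.
Proof.
move=> f0 g0 fz hinj hJ.
rewrite (esumID Q I f f0) (esum1 (D := I `&` ~` Q)); last by move=> o [Io nQ]; apply: fz.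
rewrite adde0.
apply: (@le_trans _ _ (esum (I `&` Q) (fun o => g (h o)))).
  by apply: le_esum => o [Io Qo]; case: (hJ o Io Qo) => _ ->.
rewrite -(esum_image _ _ g hinj); apply: esum_sub => //.
by move=> _ [u [Iu Qu] <-]; case: (hJ u Iu Qu).
Qed.

Lemma pwe_le (r : R) (x y : \bar R) : (0 <= r)%R -> 0 <= x -> x <= y ->
  poweR x r <= poweR y r.
Proof.
move=> r0 x0 xy; apply: gt0_ler_poweR => //; rewrite in_itv /= ?leey ?x0 //.
by rewrite (le_trans x0 xy).
Qed.

Lemma pwe_inv (r : R) (x : \bar R) : (0 < r)%R -> 0 <= x ->
  poweR (poweR x r) r^-1 = x.
Proof.
move=> r0 x0; rewrite -poweRrM mulfV ?gt_eqF // poweRe1 //.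
Qed.

Lemma pwe_inv' (r : R) (x : \bar R) : (0 < r)%R -> 0 <= x ->
  poweR (poweR x r^-1) r = x.
Proof.
move=> r0 x0; rewrite -poweRrM mulVf ?gt_eqF // poweRe1 //.
Qed.

Lemma pwe_le_inv (r : R) (x y : \bar R) : (0 < r)%R -> 0 <= x -> 0 <= y ->
  poweR x r <= poweR y r -> x <= y.
Proof.
move=> r0 x0 y0 h; rewrite -(pwe_inv _ _ r0 x0) -(pwe_inv _ _ r0 y0).
apply: pwe_le => //; first by rewrite invr_ge0 ltW.
exact: poweR_ge0.
Qed.

Lemma pwe_lt_inv (r : R) (x y : \bar R) : (0 < r)%R -> 0 <= x -> 0 <= y ->
  poweR x r < poweR y r -> x < y.
Proof.
move=> r0 x0 y0 h; rewrite ltNge; apply/negP => yx.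
by move: h; rewrite ltNge (pwe_le _ _ _ (ltW r0)) // ?poweR_ge0.
Qed.

End Basic.
Section Met.
Context {R : realType} {X : Type} (d : X -> X -> \bar R) (A : set X) (p : R).
Hypothesis dm : is_metric d.
Hypothesis p1 : (1 <= p)%R.

Lemma p_gt0 : (0 < p)%R. Proof. exact: (lt_le_trans ltr01 p1). Qed.
Lemma p_ge0 : (0 <= p)%R. Proof. exact: ltW p_gt0. Qed.
Lemma p_neq0 : (p != 0)%R. Proof. by move: p_gt0; rewrite lt0r => /andP[]. Qed.

Lemma d_ge0 x y : 0 <= d x y. Proof. by case: dm. Qed.
Lemma d_xx x : d x x = 0. Proof. by case: dm. Qed.
Lemma d_sym x y : d x y = d y x. Proof. by case: dm. Qed.
Lemma d_tri x y z : d x z <= d x y + d y z. Proof. by case: dm. Qed.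

Definition msum (a b : @fsum X) (m : matching_data) : \bar R :=
    (esum (mK m) (fun k => poweR (d (fpt a k) (fpt b (mphi m k))) p))
    + (esum (fidx a `\` mK m) (fun i => poweR (d (fpt a i) (mz m i)) p))
    + (esum (fidx b `\` (mphi m @` mK m)) (fun j => poweR (d (mw m j) (fpt b j)) p)).

Lemma pcostE a b m : pcost d p a b m = poweR (msum a b m) p^-1.
Proof. by []. Qed.

Lemma msum_ge0 a b m : 0 <= msum a b m.
Proof.
by rewrite /msum !adde_ge0 // esum_ge0 // => *; exact: poweR_ge0.
Qed.

Lemma Wp_lt a b (e : R) : (0 < e)%R -> Wp d A p a b < e%:E ->
  exists2 m, is_matching A a b m & msum a b m < (e `^ p)%:E.
Proof.
move=> e0 /ereal_inf_lt [_ [m Hm <-]] hlt; exists m => //.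
apply: (@pwe_lt_inv _ p^-1); rewrite ?invr_gt0 ?p_gt0 ?msum_ge0 ?lee_fin ?powR_ge0 //.
by rewrite -poweR_EFin pwe_inv ?p_gt0 ?lee_fin ?ltW.
Qed.

Lemma Wp_le a b m : is_matching A a b m -> Wp d A p a b <= poweR (msum a b m) p^-1.
Proof. by move=> Hm; apply: ereal_inf_lbound; exists m. Qed.

Lemma chain_bound (x : nat -> X) (y : X) : converges_to d x y ->
  poweR (d (x 0%N) y) p <=
  esum setT (fun n => (((2:R) ^+ n.+1) `^ p)%:E * poweR (d (x n) (x n.+1)) p).
Proof.
move=> cv.
set D := esum _ _.
have D0 : 0 <= D.
  by apply: esum_ge0 => n _; apply: mule_ge0; rewrite ?lee_fin ?powR_ge0 ?poweR_ge0.
have [->|Dny] := eqVneq D +oo; first by rewrite leey.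
have Dfin : D \is a fin_num by rewrite ge0_fin_numE // ltey.
set M := ((fine D) `^ p^-1)%R.
have M0 : (0 <= M)%R by rewrite powR_ge0.
have fD0 : (0 <= fine D)%R by exact: fine_ge0.
have DM : D = (M `^ p)%:E.
  by rewrite /M -powRrM mulVf ?p_neq0 // powRr1 // fineK.
have step n : d (x n) (x n.+1) <= ((2 ^+ n.+1)^-1 * M)%:E.
  have h2 : (0 < (2:R) ^+ n.+1)%R by rewrite exprn_gt0.
  rewrite EFinM lee_pdivlMl //.
  apply: (@pwe_le_inv _ p) => //; [exact: p_gt0 | by apply: mule_ge0; [rewrite lee_fin; exact: ltW | exact: d_ge0] | ].
  rewrite poweRM; [|by rewrite lee_fin ltW|exact: d_ge0].
  rewrite !poweR_EFin -DM.
  apply: (@esum_ge1 _ _ setT (fun n => (((2:R) ^+ n.+1) `^ p)%:E * poweR (d (x n) (x n.+1)) p) n) => // j _.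
  by apply: mule_ge0; rewrite ?lee_fin ?powR_ge0 ?poweR_ge0.
have chainN N : d (x 0%N) (x N) <= (M - (2 ^+ N)^-1 * M)%:E.
  elim: N => [|N IH]; first by rewrite d_xx expr0 invr1 mul1r subrr.
  apply: (le_trans (d_tri _ (x N) _)).
  apply: (le_trans (leeD IH (step N))); rewrite -EFinD lee_fin.
  have h2 : (0 < (2:R) ^+ N)%R by rewrite exprn_gt0.
  rewrite exprS invfM -!mulrA.
  have : (0 <= (2 ^+ N)^-1 * M)%R by rewrite mulr_ge0 // invr_ge0 ltW.
  set u := ((2 ^+ N)^-1 * M)%R.
  lra.
have dM : d (x 0%N) y <= M%:E.
  apply/lee_addgt0Pr => e e0.
  have [N HN] := cv e e0.
  apply: (le_trans (d_tri _ (x N) _)); apply: leeD; last exact/ltW/HN.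
  apply: (le_trans (chainN N)); rewrite lee_fin gerBl // mulr_ge0 // invr_ge0 exprn_ge0 //.
rewrite DM -poweR_EFin; apply: pwe_le => //; [exact: p_ge0| exact: d_ge0].
Qed.


Inductive state := Alive of nat | Dead of X.

Section Chain.
Variable (G : nat -> @fsum X) (M : nat -> @matching_data X).
Hypothesis HM : forall n, is_matching A (G n) (G n.+1) (M n).

Definition stepf n (s : state) : state :=
  match s with
  | Alive j => if `[< mK (M n) j >] then Alive (mphi (M n) j) else Dead (mz (M n) j)
  | Dead z => Dead z
  end.

Fixpoint st (b i n : nat) : state :=
  match n with
  | 0%N => if b == 0%N then Alive i else Dead (mw (M b.-1) i)
  | n'.+1 => if (n'.+1 < b)%N then Dead (mw (M b.-1) i)
             else if b == n'.+1 then Alive i else stepf n' (st b i n')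
  end.

Definition pt n (s : state) : X :=
  match s with Alive j => fpt (G n) j | Dead z => z end.
Definition ptt (o : nat * nat) n := pt n (st o.1 o.2 n).
Definition birth (o : nat * nat) : Prop :=
  fidx (G o.1) o.2 /\ (o.1 = 0%N \/ ~ (mphi (M o.1.-1) @` mK (M o.1.-1)) o.2).
Definition step o n := d (ptt o n) (ptt o n.+1).

Lemma st_lt b i n : (n < b)%N -> st b i n = Dead (mw (M b.-1) i).
Proof. by case: n => [|n] /= h; [rewrite gtn_eqF | rewrite h]. Qed.

Lemma st_birth b i : st b i b = Alive i.
Proof. by case: b => [|b] //=; rewrite ltnn eqxx. Qed.

Lemma st_succ b i n : (b <= n)%N -> st b i n.+1 = stepf n (st b i n).
Proof.
move=> h /=; rewrite ltnNge (leq_trans h (leqnSn n)) /=.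
by rewrite eq_sym (gtn_eqF (leq_ltn_trans h (ltnSn n))).
Qed.

Lemma st_alive_ge b i n j : st b i n = Alive j -> (b <= n)%N.
Proof. by case: (ltnP n b) => // h; rewrite st_lt. Qed.
Arguments st_alive_ge {b i n j}.

Lemma st_alive_pred b i n j : st b i n.+1 = Alive j ->
  (b = n.+1 /\ i = j) \/
  (exists j0, [/\ (b <= n)%N, st b i n = Alive j0, mK (M n) j0 & mphi (M n) j0 = j]).
Proof.
move=> h; have := st_alive_ge h; rewrite leq_eqVlt => /orP[/eqP eb|].
  by left; split => //; move: h; rewrite -eb st_birth => -[].
rewrite ltnS => bn; right; move: h; rewrite st_succ //.
case: (st b i n) => [j0|z] //=; case: asboolP => // Kj [<-].
by exists j0.
Qed.

Lemma st_alive_fidx n : forall b i j, birth (b, i) -> st b i n = Alive j -> fidx (G n) j.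
Proof.
elim: n => [|n IH] b i j [fb _].
  by move=> h; have := st_alive_ge h; rewrite leqn0 => /eqP eb; move: h fb;
    rewrite eb /= => -[<-].
case/st_alive_pred => [[eb <-]|[j0 [bn h0 Kj <-]]]; first by rewrite -eb.
by case: (HM n) => _ + _ _ _; apply.
Qed.
Arguments st_alive_fidx {n b i j}.

Lemma alive_unique n : forall o o' j, birth o -> birth o' ->
  st o.1 o.2 n = Alive j -> st o'.1 o'.2 n = Alive j -> o = o'.
Proof.
elim: n => [|n IH] [b i] [b' i'] j /= Bo Bo'.
  by case: b Bo => [|b] Bo; case: b' Bo' => [|b'] Bo' //= [->] [->].
case/st_alive_pred => [[eb ei]|[j0 [bn h0 Kj0 ej0]]];
  case/st_alive_pred => [[eb' ei']|[j0' [bn' h0' Kj0' ej0']]].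
- by rewrite eb eb' ei ei'.
- exfalso; case: Bo => _ [|]; first by rewrite eb.
  by apply; rewrite eb /=; exists j0' => //; rewrite ej0' ei.
- exfalso; case: Bo' => _ [|]; first by rewrite eb'.
  by apply; rewrite eb' /=; exists j0 => //; rewrite ej0 ei'.
- have ej : j0 = j0'.
    by case: (HM n) => _ _ inj _ _; apply: inj; rewrite ?inE // ej0 ej0'.
  by apply: (IH (b, i) (b', i') j0) => //=; rewrite ej.
Qed.

Lemma st_dead b i n z : (b <= n)%N -> st b i n = Dead z -> forall k, st b i (k + n) = Dead z.
Proof.
move=> bn h; elim => [|k IH] //.
by rewrite addSn st_succ ?IH // (leq_trans bn) // leq_addl.
Qed.

Lemma st_dead_A n : forall b i z, birth (b, i) -> (b <= n)%N -> st b i n = Dead z -> A z.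
Proof.
elim: n => [|n IH] b i z Bo.
  by rewrite leqn0 => /eqP ->.
rewrite leq_eqVlt => /orP[/eqP ->|]; first by rewrite st_birth.
rewrite ltnS => bn; rewrite st_succ //.
case E: (st b i n) => [j|z'] /=.
  case: asboolP => // nK [<-].
  have fj := st_alive_fidx Bo E.
  by case: (HM n) => _ _ _ + _; apply.
by move=> [<-]; apply: (IH b i).
Qed.

Lemma pos_birth n j : fidx (G n) j -> exists o, birth o /\ st o.1 o.2 n = Alive j.
Proof.
elim: n j => [|n IH] j fj.
  by exists (0%N, j); split => //; split => //; left.
have [[j0 Kj0 <-]|nim] := pselect ((mphi (M n) @` mK (M n)) j).
  have fj0 : fidx (G n) j0 by case: (HM n) => + _ _ _ _; apply.
  have [[b i] [Bo h]] := IH j0 fj0.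
  exists (b, i); split => //; rewrite (st_succ b i n); last exact: st_alive_ge h.
  by move: h => /= ->; rewrite /= asboolT.
by exists (n.+1, j); split; [split => //; right | exact: st_birth].
Qed.


Definition births : set (nat * nat) := [set o | birth o].

Lemma level_sum n :
  esum births (fun o => poweR (step o n) p) <= msum (G n) (G n.+1) (M n).
Proof.
set g1 := fun k => poweR (d (fpt (G n) k) (fpt (G n.+1) (mphi (M n) k))) p.
set g2 := fun i => poweR (d (fpt (G n) i) (mz (M n) i)) p.
set g3 := fun j => poweR (d (mw (M n) j) (fpt (G n.+1) j)) p.
pose f1 o := match st o.1 o.2 n with
  Alive j => if `[< mK (M n) j >] then g1 j else 0 | Dead _ => 0 end.
pose f2 o := match st o.1 o.2 n with
  Alive j => if `[< mK (M n) j >] then 0 else g2 j | Dead _ => 0 end.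
pose f3 o := if o.1 == n.+1 then g3 o.2 else 0.
pose h o := match st o.1 o.2 n with Alive j => j | Dead _ => 0%N end.
have g10 j : 0 <= g1 j by exact: poweR_ge0.
have g20 j : 0 <= g2 j by exact: poweR_ge0.
have g30 j : 0 <= g3 j by exact: poweR_ge0.
have f10 o : 0 <= f1 o by rewrite /f1; case: (st _ _ _) => //= j; case: ifP.
have f20 o : 0 <= f2 o by rewrite /f2; case: (st _ _ _) => //= j; case: ifP.
have f30 o : 0 <= f3 o by rewrite /f3; case: ifP.
have pw0 : poweR 0 p = 0 by rewrite poweR0r // p_neq0.
have pointwise o : births o -> poweR (step o n) p <= f1 o + f2 o + f3 o.
  move: o => [b i] Bo; rewrite /step /ptt /f1 /f2 /f3.
  have [bn|nb] := leqP b n.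
    rewrite (st_succ b i n) // [(_, _).1]/= [(_, _).2]/= eq_sym (gtn_eqF (leq_ltn_trans bn (ltnSn n))) adde0.
    case: (st b i n) => [j|z] /=.
      case: asboolP => Kj /=; first by rewrite adde0.
      by rewrite add0e.
    by rewrite d_xx pw0 adde0.
  rewrite [(_, _).1]/= [(_, _).2]/= (st_lt b i n nb).
  move: nb; rewrite leq_eqVlt => /orP[/eqP <-|nb].
    by rewrite st_birth eqxx /= !add0e.
  by rewrite (st_lt b i n.+1 nb) d_xx pw0 /= (gtn_eqF nb) !add0e.
apply: (le_trans (le_esum pointwise)).
rewrite esumD; [|by move=> o _; rewrite adde_ge0|by []].
rewrite esumD //.
rewrite /msum; apply: leeD; first apply: leeD.
- apply: (@esum_inj_le _ _ _ births (mK (M n))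
      [set o | exists j, st o.1 o.2 n = Alive j /\ mK (M n) j] h) => //.
  + by move=> *; exact: poweR_ge0.
  + move=> [b i] _ nQ; rewrite /f1 /=; case E: (st b i n) => [j|] //.
    by case: asboolP => // Kj; exfalso; apply: nQ; exists j.
  + move=> o o' /set_mem[Bo [j [Ej _]]] /set_mem[Bo' [j' [Ej' _]]]; rewrite /h Ej Ej' => ejj.
    by apply: (@alive_unique n o o' j Bo Bo' Ej); rewrite Ej' ejj.
  + move=> o Bo [j [Ej Kj]]; rewrite /f1 /h Ej; split => //.
    by rewrite asboolT.
- apply: (@esum_inj_le _ _ _ births (fidx (G n) `\` mK (M n))
      [set o | exists j, st o.1 o.2 n = Alive j /\ ~ mK (M n) j] h) => //.
  + by move=> *; exact: poweR_ge0.
  + move=> [b i] _ nQ; rewrite /f2 /=; case E: (st b i n) => [j|] //.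
    by case: asboolP => // Kj; exfalso; apply: nQ; exists j.
  + move=> o o' /set_mem[Bo [j [Ej _]]] /set_mem[Bo' [j' [Ej' _]]]; rewrite /h Ej Ej' => ejj.
    by apply: (@alive_unique n o o' j Bo Bo' Ej); rewrite Ej' ejj.
  + move=> [b i] Bo [j [Ej Kj]]; rewrite /f2 /h Ej asboolF //; split => //.
    by split => //; exact: (st_alive_fidx Bo Ej).
- apply: (@esum_inj_le _ _ _ births (fidx (G n.+1) `\` (mphi (M n) @` mK (M n)))
      [set o | o.1 = n.+1] snd) => //.
  + by move=> *; exact: poweR_ge0.
  + by move=> [b i] _ /= nQ; rewrite /f3 /=; case: eqP.
  + by move=> [b i] [b' i'] /set_mem[_ /= ->] /set_mem[_ /= ->] /= ->.
  + move=> [b i] [fb Bb] /= eb; rewrite /f3 /= eb eqxx; split => //.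
    split; first by rewrite -eb.
    by case: Bb; rewrite eb.
Qed.
Definition cw n : \bar R := (((2:R) ^+ n.+1) `^ p)%:E.
Definition Dob o := esum setT (fun n => cw n * poweR (step o n) p).

Lemma cw_ge0 n : 0 <= cw n. Proof. by rewrite lee_fin powR_ge0. Qed.

Lemma Dob_ge0 o : 0 <= Dob o.
Proof. by apply: esum_ge0 => n _; rewrite mule_ge0 ?cw_ge0 ?poweR_ge0. Qed.

Lemma Dob_bound o y : converges_to d (ptt o) y -> poweR (d (ptt o 0%N) y) p <= Dob o.
Proof. by move=> cv; exact: (chain_bound (ptt o) y cv). Qed.

Lemma births_Dob (T : nat -> \bar R) :
  (forall n, msum (G n) (G n.+1) (M n) <= T n) ->
  esum births Dob <= esum setT (fun n => cw n * T n).
Proof.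
move=> HT; rewrite /Dob esum_swap; last by move=> *; rewrite mule_ge0 ?cw_ge0 ?poweR_ge0.
apply: le_esum => n _.
rewrite /cw; apply: (le_trans (esum_le_scale _ _ _ _ (powR_ge0 _ _) (fun j => poweR_ge0 _ _))).
apply: lee_wpmul2l; first by rewrite lee_fin powR_ge0.
exact: (le_trans (level_sum n)).
Qed.

Lemma GCL (T : nat -> \bar R) (beta : @fsum X) (iota : nat -> nat * nat) :
  (forall n, msum (G n) (G n.+1) (M n) <= T n) ->
  set_inj (fidx beta) iota ->
  (forall y, fidx beta y -> birth (iota y) /\ converges_to d (ptt (iota y)) (fpt beta y)) ->
  (forall x, fidx (G 0%N) x -> ~ (iota @` fidx beta) (0%N, x) ->
     (forall n, exists j, st 0 x n = Alive j) ->
     exists2 z, A z & converges_to d (ptt (0%N, x)) z) ->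
  exists2 m, is_matching A (G 0%N) beta m &
     msum (G 0%N) beta m <= esum setT (fun n => cw n * T n).
Proof.
move=> HT Hinj H2 H3.
pose K' := [set x | fidx (G 0%N) x /\ exists2 y, fidx beta y & iota y = (0%N, x)].
pose phi' x := xget 0%N [set y | fidx beta y /\ iota y = (0%N, x)].
have phiP x : K' x -> fidx beta (phi' x) /\ iota (phi' x) = (0%N, x).
  move=> [_ [y fy ey]]; apply: (@xgetPex _ 0%N [set y | fidx beta y /\ iota y = (0%N, x)]).
  by exists y.
have zex x : exists z, (fidx (G 0%N) x /\ ~ K' x) -> A z /\ converges_to d (ptt (0%N, x)) z.
  have [[fx nK]|np] := pselect (fidx (G 0%N) x /\ ~ K' x); last first.
    by exists (fpt (G 0%N) x).
  have [alive|nalive] := pselect (forall n, exists j, st 0 x n = Alive j).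
    have [|z Az cz] := H3 x fx _ alive; last by exists z.
    by move=> [y fy ey]; apply: nK; split => //; exists y.
  have [n Hn] : exists n, forall j, st 0 x n <> Alive j.
    apply: contra_notP nalive => h n; apply: contra_notP h => h.
    by exists n => j ej; apply: h; exists j.
  case E: (st 0 x n) => [j|z]; first by exfalso; apply: (Hn j).
  exists z => _; split.
    by apply: (@st_dead_A n 0 x z) => //; split => //; left.
  move=> e e0; exists n => m nm; rewrite /ptt /=.
  have := @st_dead 0 x n z (leq0n n) E (m - n); rewrite subnK // => ->.
  by rewrite /= d_xx.
have [zf zfP] := choice zex.
pose w' y := mw (M (iota y).1.-1) (iota y).2.
pose m' := MData K' phi' zf w'.
have iota_ne0 y : fidx beta y -> ~ (phi' @` K') y -> (iota y).1 <> 0%N.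
  move=> fy nim eb; apply: nim.
  have K'i : K' (iota y).2.
    split; first by have [[+ _] _] := H2 y fy; rewrite eb.
    by exists y => //; rewrite -eb -surjective_pairing.
  exists (iota y).2 => //.
  have [f1 e1] := phiP _ K'i; apply: Hinj; rewrite ?inE //.
  by rewrite e1 -eb -surjective_pairing.
have Hm' : is_matching A (G 0%N) beta m'.
  split => /=.
  - by move=> x [].
  - by move=> k /phiP [].
  - move=> x x' /set_mem Kx /set_mem Kx' e.
    by have [_ e1] := phiP _ Kx; have [_ e2] := phiP _ Kx'; move: e1 e2; rewrite e => -> [].
  - by move=> i fi nK; have [] := zfP i (conj fi nK).
  - move=> j fj nim; rewrite /w'.
    have [[fb [eb|nb]] _] := H2 j fj; first by exfalso; apply: (iota_ne0 j fj nim).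
    have b0 := iota_ne0 j fj nim.
    have [k ek] : exists k, (iota j).1 = k.+1 by case: ((iota j).1) b0 => // k _; exists k.
    move: fb nb; rewrite ek /= => fb nb.
    by case: (HM k) => _ _ _ _; apply.
exists m' => //.
pose F1 o := if (o.1 == 0%N) && `[< K' o.2 >] then Dob o else 0.
pose F2 o := if (o.1 == 0%N) && ~~ `[< K' o.2 >] then Dob o else 0.
pose F3 o := if o.1 != 0%N then Dob o else 0.
have F10 o : 0 <= F1 o by rewrite /F1; case: ifP => // _; exact: Dob_ge0.
have F20 o : 0 <= F2 o by rewrite /F2; case: ifP => // _; exact: Dob_ge0.
have F30 o : 0 <= F3 o by rewrite /F3; case: ifP => // _; exact: Dob_ge0.
apply: (@le_trans _ _ (esum births (fun o => F1 o + F2 o + F3 o))); last first.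
  apply: (le_trans _ (births_Dob T HT)); apply: le_esum => o _.
  rewrite /F1 /F2 /F3; case: eqP => _ /=; last by rewrite !add0e.
  by case: asboolP => _ /=; rewrite ?adde0 ?add0e.
rewrite esumD; [|by move=> o _; rewrite adde_ge0|by []].
rewrite esumD //.
rewrite /msum /=; apply: leeD; first apply: leeD.
- apply: (@esum_inj_le _ _ _ K' births setT (fun x => (0%N, x))) => //.
  + by move=> *; exact: poweR_ge0.
  + by move=> x _ nQ; exfalso; apply: nQ.
  + by move=> x x' _ _ [].
  + move=> x Kx _; split; first by split; [case: Kx | left].
    rewrite /F1 /= asboolT //.
    have [f1 e1] := phiP _ Kx.
    have [_ cv] := H2 _ f1; rewrite e1 in cv.
    exact: (Dob_bound _ _ cv).
- apply: (@esum_inj_le _ _ _ (fidx (G 0%N) `\` K') births setT (fun x => (0%N, x))) => //.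
  + by move=> *; exact: poweR_ge0.
  + by move=> x _ nQ; exfalso; apply: nQ.
  + by move=> x x' _ _ [].
  + move=> x [fx nK] _; split; first by split => //; left.
    rewrite /F2 /= asboolF //.
    have [_ cv] := zfP x (conj fx nK).
    exact: (Dob_bound _ _ cv).
- apply: (@esum_inj_le _ _ _ (fidx beta `\` (phi' @` K')) births setT iota) => //.
  + by move=> *; exact: poweR_ge0.
  + by move=> x _ nQ; exfalso; apply: nQ.
  + move=> y y' /set_mem [[fy _] _] /set_mem [[fy' _] _] e.
    by apply: Hinj; rewrite ?inE.
  + move=> y [fy nim] _; have [By cv] := H2 y fy; split => //.
    have b0 := iota_ne0 y fy nim.
    rewrite /F3 ifT; last by apply/eqP.
    have e : ptt (iota y) 0%N = w' y by rewrite /ptt /= ifF //; apply/eqP.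
    by have := Dob_bound _ _ cv; rewrite e.
Qed.
End Chain.

Lemma st_tail (M M' : nat -> @matching_data X) b i n b' i' n' :
  (b <= n)%N -> (b' <= n')%N -> (forall t, M (t + n)%N = M' (t + n')%N) ->
  st M b i n = st M' b' i' n' -> forall t, st M b i (t + n) = st M' b' i' (t + n').
Proof.
move=> bn bn' HMM e; elim => [|t IH] //.
rewrite !addSn st_succ; last by rewrite (leq_trans bn) // leq_addl.
rewrite st_succ; last by rewrite (leq_trans bn') // leq_addl.
by rewrite IH /stepf HMM.
Qed.

Lemma ptt_tail (G G' : nat -> @fsum X) (M M' : nat -> @matching_data X) o o' n n' :
  (o.1 <= n)%N -> (o'.1 <= n')%N -> (forall t, M (t + n)%N = M' (t + n')%N) ->
  (forall t, G (t + n)%N = G' (t + n')%N) ->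
  st M o.1 o.2 n = st M' o'.1 o'.2 n' ->
  forall t, ptt G M o (t + n) = ptt G' M' o' (t + n').
Proof.
move=> bn bn' HMM HGG e t; rewrite /ptt (@st_tail M M' o.1 o.2 n o'.1 o'.2 n' bn bn' HMM e t).
by case: (st M' o'.1 o'.2 (t + n')) => //= j; rewrite HGG.
Qed.

Lemma conv_tail (x x' : nat -> X) y n n' :
  (forall t, x (t + n)%N = x' (t + n')%N) -> converges_to d x y -> converges_to d x' y.
Proof.
move=> ht cv e e0; have [N HN] := cv e e0; exists (N + n')%N => t hm.
have -> : t = ((t - n') + n')%N by lia.
rewrite -ht; apply: HN; lia.
Qed.

Lemma dist_ge0 x : 0 <= dist_set d x A.
Proof. by apply: le_ereal_inf_tmp => _ [a _ <-]; exact: d_ge0. Qed.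

Lemma dist_le x a : A a -> dist_set d x A <= d x a.
Proof. by move=> Aa; apply: ereal_inf_lbound; exists a. Qed.

Lemma dist_tri y x : dist_set d y A <= d y x + dist_set d x A.
Proof.
have [e|nf] := eqVneq (d y x) +oo.
  by rewrite e addye ?leey // gt_eqF // (lt_le_trans _ (dist_ge0 x)) // ltNye.
have fin : d y x \is a fin_num by rewrite ge0_fin_numE ?d_ge0 // ltey.
rewrite -leeBlDl //; apply: le_ereal_inf_tmp => _ [a Aa <-].
rewrite leeBlDl //; apply: (le_trans (dist_le y a Aa)); exact: d_tri.
Qed.
Lemma pw_add (a b : \bar R) : 0 <= a -> 0 <= b ->
  poweR (a + b) p <= ((2:R) `^ p)%:E * (poweR a p + poweR b p).
Proof.
wlog ab : a b / a <= b.
  move=> W a0 b0; have [ab|ba] := leP a b; first exact: W.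
  by rewrite addeC [poweR a p + _]addeC; apply: W => //; exact: ltW.
move=> a0 b0.
have c0 : (0 < (2:R) `^ p)%R by rewrite powR_gt0.
case: b ab b0 => [r| |] //; last first.
  move=> _ _; have pa := poweR_ge0 a p.
  have an : a != -oo by rewrite -ltNye (lt_le_trans (ltNyr 0%R) a0).
  have pn : poweR a p != -oo by rewrite -ltNye (lt_le_trans (ltNyr 0%R) pa).
  rewrite addey // poweRyr ?p_neq0 // addey // gt0_muley ?lte_fin ?leey //.
move=> ar r0; case: a a0 ar => [s| |] //= s0 sr.
rewrite -!EFinD -!EFinM lee_fin.
move: r0 sr; rewrite !lee_fin => r0 sr.
move: s0; rewrite ?lee_fin => s0.
apply: (@le_trans _ _ (((2:R) * r) `^ p)%R).
  apply: ge0_ler_powR; [exact: p_ge0 | by rewrite nnegrE addr_ge0 | by rewrite nnegrE mulr_ge0 |].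
  by rewrite mulr_natl mulr2n lerD2r.
rewrite powRM // ler_pM2l // lerDr powR_ge0 //.
Qed.

Lemma esum_term_fin (T : choiceType) (I : set T) (f : T -> \bar R) i :
  I i -> (forall j, I j -> 0 <= f j) -> esum I f < +oo -> f i < +oo.
Proof. by move=> Ii f0; apply: le_lt_trans; exact: esum_ge1. Qed.

Lemma pw_fin (x : \bar R) : poweR x p < +oo -> x < +oo.
Proof. by apply: lty_poweRy; exact: p_neq0. Qed.

Lemma msum_parts a b m : msum a b m < +oo ->
  [/\ esum (mK m) (fun k => poweR (d (fpt a k) (fpt b (mphi m k))) p) < +oo,
      esum (fidx a `\` mK m) (fun i => poweR (d (fpt a i) (mz m i)) p) < +oo &
      esum (fidx b `\` (mphi m @` mK m)) (fun j => poweR (d (mw m j) (fpt b j)) p) < +oo].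
Proof.
rewrite /msum => h.
have e0 : forall (I : set nat) (f : nat -> X) (g : nat -> X),
  0 <= esum I (fun k => poweR (d (f k) (g k)) p) by move=> *; apply: esum_ge0 => *; exact: poweR_ge0.
split.
- apply: le_lt_trans h; rewrite -addeA; apply: leeDl; exact: adde_ge0.
- apply: le_lt_trans h; rewrite -addeA addeC -addeA; apply: leeDl; exact: adde_ge0.
- apply: le_lt_trans h; apply: leeDr; exact: adde_ge0.
Qed.

Arguments esum_term_fin {T I f i}.

Lemma mul_fin (c : R) (x : \bar R) : 0 <= x -> x < +oo -> c%:E * x < +oo.
Proof.
move=> x0 xf; have xfin : x \is a fin_num by rewrite ge0_fin_numE.
by rewrite -(fineK xfin) -EFinM ltry.
Qed.

Lemma Dp_transfer (del bet : @fsum X) (Mt : @matching_data X) :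
  Dp d A p del -> in_Dbar A bet -> is_matching A del bet Mt ->
  msum del bet Mt < +oo -> Dp d A p bet.
Proof.
move=> [Ddel [Udel Wdel]] Dbet Hm hfin.
have [E1f E2f E3f] := msum_parts _ _ _ hfin.
have Hm' := Hm; case: Hm' => HK HKb Hinj Hz Hw.
have pw0 : forall x, 0 <= poweR x p by move=> x; exact: poweR_ge0.
have d1 x : mK Mt x -> d (fpt del x) (fpt bet (mphi Mt x)) < +oo.
  by move=> Kx; apply: pw_fin; exact: (esum_term_fin Kx (fun j _ => pw0 _) E1f).
have d3 c : fidx bet c -> ~ (mphi Mt @` mK Mt) c -> d (mw Mt c) (fpt bet c) < +oo.
  move=> fc nim; apply: pw_fin.
  by apply: (@esum_term_fin _ (fidx bet `\` (mphi Mt @` mK Mt)) _ c (conj fc nim) (fun j _ => pw0 _) E3f).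
split => //; split.
  apply: (@sub_finite_set _ _ (mphi Mt @` fidx (u_part d A +oo del))); last exact: finite_image.
  move=> c /= [fc nn].
  have [[x Kx ex]|nim] := pselect ((mphi Mt @` mK Mt) c).
    exists x => //; split; first exact: HK.
    move=> hx; apply: nn; rewrite /nbhd_set /=.
    apply: le_lt_trans (dist_tri _ (fpt del x)) _.
    by apply: lte_add_pinfty => //; rewrite d_sym -ex; exact: d1.
  exfalso; apply: nn; rewrite /nbhd_set /=.
  by apply: le_lt_trans (dist_le _ _ (Hw c fc nim)) _; rewrite d_sym; exact: d3.
set ldel := l_part d A +oo del.
set lbet := l_part d A +oo bet.
have [_ [m0 Hm0 <-] lt0] := ereal_inf_lt Wdel.
have h0 : msum ldel (fsum_zero ldel) m0 < +oo.
  by move: lt0; rewrite pcostE; apply: lty_poweRy; rewrite invr_eq0 p_neq0.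
have [_ E02 _] := msum_parts _ _ _ h0.
case: Hm0 => HK0 HKb0 _ Hz0 _.
have K0e x : ~ mK m0 x by move=> /HKb0.
pose pre c := xget 0%N [set x | mK Mt x /\ mphi Mt x = c].
have preP c : (mphi Mt @` mK Mt) c -> mK Mt (pre c) /\ mphi Mt (pre c) = c.
  by move=> [x Kx ex]; apply: (@xgetPex _ 0%N [set x | mK Mt x /\ mphi Mt x = c]); exists x.
have pre_l c : fidx lbet c -> (mphi Mt @` mK Mt) c -> fidx ldel (pre c).
  move=> [fc [nc nA]] im; have [Kx ex] := preP c im.
  split; first exact: HK.
  split; last by apply: Ddel; exact: HK.
  rewrite /nbhd_set /=; apply: le_lt_trans (dist_tri _ (fpt bet c)) _.
  by apply: lte_add_pinfty => //; have := d1 _ Kx; rewrite ex.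
pose zL c := if `[< (mphi Mt @` mK Mt) c >] then mz m0 (pre c) else mw Mt c.
pose mL := MData set0 id zL (mw Mt).
have HmL : is_matching A lbet (fsum_zero lbet) mL.
  split => //=.
  - move=> c fc _; rewrite /zL; case: asboolP => im.
      by apply: Hz0; [exact: pre_l | exact: K0e].
    by apply: Hw => //; case: fc.
apply: le_lt_trans (Wp_le _ _ _ HmL) _; apply: poweR_lty.
rewrite /msum /= esum_set0 add0e.
rewrite (_ : esum (set0 `\` _) _ = 0); last by apply: esum1 => i [].
rewrite adde0.
pose img := mphi Mt @` mK Mt.
pose g1 c := if `[< img c >] then ((2:R) `^ p)%:E *
   (poweR (d (fpt del (pre c)) (fpt bet c)) p + poweR (d (fpt del (pre c)) (mz m0 (pre c))) p) else 0.
pose g2 c := if `[< img c >] then 0 else poweR (d (mw Mt c) (fpt bet c)) p.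
have g10 c : 0 <= g1 c.
  rewrite /g1; case: ifP => // _; apply: mule_ge0; first by rewrite lee_fin powR_ge0.
  exact: adde_ge0.
have g20 c : 0 <= g2 c by rewrite /g2; case: ifP.
apply: (@le_lt_trans _ _ (esum (fidx lbet `\` set0) (fun c => g1 c + g2 c))).
  apply: le_esum => c [fc _]; rewrite /zL /g1 /g2 /=; case: asboolP => im.
    rewrite adde0; have [Kx ex] := preP c im.
    apply: (le_trans _ (pw_add _ _ (d_ge0 _ _) (d_ge0 _ _))).
    apply: pwe_le; [exact: p_ge0 | exact: d_ge0 |].
    by rewrite [d (fpt del _) (fpt bet c)]d_sym; exact: d_tri.
  by rewrite add0e d_sym.
rewrite esumD //; apply: lte_add_pinfty.
  pose gg x := ((2:R) `^ p)%:E * (poweR (d (fpt del x) (fpt bet (mphi Mt x))) p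
                                   + poweR (d (fpt del x) (mz m0 x)) p).
  apply: (@le_lt_trans _ _ (esum (mK Mt `&` fidx ldel) gg)).
    apply: (@esum_inj_le _ _ _ _ _ img pre) => //.
    - by move=> x _; rewrite /gg; apply: mule_ge0; [rewrite lee_fin powR_ge0 | exact: adde_ge0].
    - by move=> c _ nim; rewrite /g1 asboolF.
    - move=> c c' /set_mem [_ im] /set_mem [_ im'] e.
      by rewrite -(preP c im).2 -(preP c' im').2 e.
    - move=> c [fc _] im; have [Kx ex] := preP c im; split; first by split => //; exact: pre_l.
      by rewrite /g1 /gg asboolT // ex.
  apply: (le_lt_trans (esum_le_scale _ _ _ _ (powR_ge0 _ _) (fun j => adde_ge0 (pw0 _) (pw0 _)))).
  apply: mul_fin; first by apply: esum_ge0 => *; exact: adde_ge0.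
  rewrite esumD //; apply: lte_add_pinfty.
    by apply: le_lt_trans E1f; apply: esum_sub => // x [].
  apply: le_lt_trans E02; apply: esum_sub => // x [_ lx]; split => //; exact: K0e.
apply: (@le_lt_trans _ _ (esum (fidx bet `\` img) (fun c => poweR (d (mw Mt c) (fpt bet c)) p))) => //.
apply: (@esum_inj_le _ _ _ _ _ (~` img) id) => //.
- by move=> c _ /contrapT im; rewrite /g2 asboolT.
- by move=> c [[fc _] _] nim; split; [split | rewrite /g2 asboolF].
Qed.
Section App.
Variable alpha : nat -> @fsum X.

Definition hh : R := 2^-1.
Definition rho j : R := hh ^+ (4 * j + 4).

Lemma hh_gt0 : (0 < hh)%R. Proof. by rewrite /hh invr_gt0. Qed.
Lemma hh_le1 : (hh <= 1)%R. Proof. by rewrite /hh invf_le1 // ler1n. Qed.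
Lemma rho_gt0 j : (0 < rho j)%R. Proof. by rewrite /rho exprn_gt0 // hh_gt0. Qed.
Lemma two_hh : ((2:R) * hh = 1)%R. Proof. by rewrite /hh mulfV. Qed.

Lemma two_rho a e : (a <= e)%N -> ((2:R) ^+ a * hh ^+ e = hh ^+ (e - a))%R.
Proof.
move=> ae; rewrite -{1}(subnKC ae) exprD mulrA -exprMn two_hh expr1n mul1r //.
Qed.

Lemma hh_mono a b : (a <= b)%N -> (hh ^+ b <= hh ^+ a)%R.
Proof. by move=> ab; apply: ler_wiXn2l => //; [exact: ltW hh_gt0 | exact: hh_le1]. Qed.

Lemma rho_succ n : (2 * rho n.+1 <= rho n)%R.
Proof.
have e : rho n.+1 = (rho n * hh ^+ 4)%R.
  by rewrite /rho -exprD (_ : (4 * n.+1 + 4 = 4 * n + 4 + 4)%N) //; lia.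
have h4 : (hh ^+ 4 <= hh)%R by have := @hh_mono 1 4 isT; rewrite expr1.
have r0 := ltW (rho_gt0 n).
rewrite e; apply: (@le_trans _ _ (2 * (rho n * hh))%R).
  by rewrite ler_wpM2l // ler_wpM2l.
by rewrite mulrCA two_hh mulr1.
Qed.

Lemma rho_le_hh a : (rho a <= hh ^+ a)%R.
Proof. by apply: hh_mono; lia. Qed.

Lemma geo_bound (x : nat -> X) : (forall n, d (x n) (x n.+1) <= (rho n)%:E) ->
  forall a t, d (x a) (x (t + a)%N) <= (2 * rho a - 2 * rho (t + a))%:E.
Proof.
move=> hs a; elim => [|t IH]; first by rewrite add0n d_xx subrr.
apply: (le_trans (d_tri _ (x (t + a)%N) _)); rewrite addSn.
apply: (le_trans (leeD IH (hs _))); rewrite -EFinD lee_fin.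
have := rho_succ (t + a); lra.
Qed.

Lemma cauchy_geo (x : nat -> X) : (forall n, d (x n) (x n.+1) <= (rho n)%:E) ->
  cauchy_seq d x.
Proof.
move=> hs e e0.
have [a ha] := half_small _ (divr_gt0 e0 (ltr0Sn _ 3)).
exists a => m' n' am an.
have gb := geo_bound x hs a.
have r0 t := ltW (rho_gt0 t).
have h1 := gb (m' - a)%N; have h2 := gb (n' - a)%N.
rewrite subnK // in h1; rewrite subnK // in h2.
apply: (le_lt_trans (d_tri _ (x a) _)); rewrite d_sym.
apply: (le_lt_trans (leeD h1 h2)); rewrite -EFinD lte_fin.
have := rho_le_hh a; have := r0 (m' - a + a)%N; have := r0 (n' - a + a)%N.
rewrite /hh in ha *.
move: ha; set u := ((2:R)^-1 ^+ a)%R; set r := rho a.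
move=> ha h3 h4 h5.
have : (4 * r < e)%R.
  have : (u * 4 < e)%R by rewrite -ltr_pdivlMr.
  lra.
rewrite (subnK am) (subnK an) in h3 h4 *.
lra.
Qed.

Variable N : nat -> nat.
Hypothesis HN : forall j a b, (N j <= a)%N -> (N j <= b)%N ->
  Wp d A p (alpha a) (alpha b) < (rho j)%:E.

Definition kk j := (\max_(i < j.+1) N i)%N.
Lemma N_le_kk j : (N j <= kk j)%N.
Proof. exact: (@leq_bigmax _ (fun i : 'I_j.+1 => N i) ord_max). Qed.
Lemma kk_succ j : (kk j <= kk j.+1)%N.
Proof. by rewrite /kk [X in (_ <= X)%N]big_ord_recr /= leq_maxl. Qed.

Definition gam j := alpha (kk j).

Lemma exists_m : exists m : nat -> @matching_data X, forall j,
  is_matching A (gam j) (gam j.+1) (m j) /\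
  msum (gam j) (gam j.+1) (m j) < ((rho j) `^ p)%:E.
Proof.
suff H : forall j, exists mj : @matching_data X, is_matching A (gam j) (gam j.+1) mj /\
   msum (gam j) (gam j.+1) mj < ((rho j) `^ p)%:E.
  by have [f hf] := boolp.choice H; exists f.
move=> j.
have [m0 H1 H2] := Wp_lt _ _ _ (rho_gt0 j)
  (HN j (kk j) (kk j.+1) (N_le_kk j) (leq_trans (N_le_kk j) (kk_succ j))).
by exists m0.
Qed.

Variable m : nat -> @matching_data X.
Hypothesis Hm : forall j, is_matching A (gam j) (gam j.+1) (m j) /\
  msum (gam j) (gam j.+1) (m j) < ((rho j) `^ p)%:E.
Let HMg j := (Hm j).1.

Lemma step_le o n : birth gam m o -> d (ptt gam m o n) (ptt gam m o n.+1) <= (rho n)%:E.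
Proof.
move=> Bo.
have h := le_lt_trans (@level_sum gam m HMg n) (Hm n).2.
have h2 : poweR (step gam m o n) p < ((rho n) `^ p)%:E.
  apply: le_lt_trans h; apply: (@esum_ge1 _ _ (births gam m) (fun o => poweR (step gam m o n) p) o Bo).
  by move=> *; exact: poweR_ge0.
apply: (@pwe_le_inv _ p); [exact: p_gt0 | exact: d_ge0 | by rewrite lee_fin ltW ?rho_gt0 |].
exact: ltW.
Qed.

Lemma exists_L : complete d -> exists L : nat * nat -> X, forall o,
  birth gam m o -> converges_to d (ptt gam m o) (L o).
Proof.
move=> Hc.
suff H : forall o, exists l, birth gam m o -> converges_to d (ptt gam m o) l.
  by have [f hf] := boolp.choice H; exists f.
move=> o.
have [Bo|nB] := pselect (birth gam m o); last by exists (ptt gam m o 0%N).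
have [l hl] := Hc _ (cauchy_geo _ (fun n => step_le o n Bo)).
by exists l.
Qed.


Variable L : nat * nat -> X.
Hypothesis HL : forall o, birth gam m o -> converges_to d (ptt gam m o) (L o).

Definition alive_fw (o : nat * nat) :=
  forall t, (o.1 <= t)%N -> exists j, st m o.1 o.2 t = Alive j.
Definition Bidx : set nat :=
  [set c | exists o, [/\ c = pickle o, birth gam m o, alive_fw o & ~ A (L o)]].
Definition dec (c : nat) : nat * nat := odflt (0%N, 0%N) (unpickle c).
Definition beta : @fsum X := FSum Bidx (fun c => L (dec c)).

Lemma dec_pickle o : dec (pickle o) = o.
Proof. by rewrite /dec pickleK. Qed.

Lemma beta_Dbar : in_Dbar A beta.
Proof. by move=> c [u [-> _ _ nA]]; rewrite /= dec_pickle. Qed.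

Definition Tt J t : \bar R :=
  if t is t'.+1 then ((rho (t' + J)) `^ p)%:E else ((rho J) `^ p)%:E.

Lemma bound_T J : esum setT (fun t => cw t * Tt J t) <= (hh ^+ J)%:E.
Proof.
apply: (@le_trans _ _ (esum setT (fun t : nat => (hh ^+ J)%:E * (hh ^+ t.+1)%:E))).
  apply: le_esum => t _.
  set e := (if t is t'.+1 then (4 * (t' + J) + 4)%N else (4 * J + 4)%N).
  have eT : Tt J t = ((hh ^+ e) `^ p)%:E by case: t @e.
  have te : (t.+1 <= e)%N by case: t @e eT => [|t] /= _; lia.
  have te2 : (J + t.+1 <= e - t.+1)%N by case: t @e eT te => [|t] /= _ _; lia.
  have h0 : (0 <= hh)%R := ltW hh_gt0.
  have key : ((((2:R)^+t.+1) `^ p) * ((hh ^+ e) `^ p) <= hh ^+ J * hh ^+ t.+1)%R.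
    rewrite -powRM ?exprn_ge0 // two_rho // -exprD.
    apply: (@le_trans _ _ ((hh ^+ (J + t.+1)) `^ p)%R).
      apply: ge0_ler_powR; [exact: p_ge0 | by rewrite nnegrE exprn_ge0 | by rewrite nnegrE exprn_ge0 |].
      exact: hh_mono.
    apply: ge1r_powR => //; rewrite exprn_gt0 ?hh_gt0 //=.
    by apply: exprn_ile1 => //; exact: hh_le1.
  by rewrite /cw eT -!EFinM lee_fin.
rewrite (_ : (fun t => _) = (fun t : nat => (hh ^+ J)%:E * (((2:R)^-1) ^+ t.+1)%:E)) //.
apply: (le_trans (esum_le_scale _ _ _ _ _ _)).
- by rewrite exprn_ge0 // ltW // hh_gt0.
- by move=> t; rewrite lee_fin exprn_ge0 // invr_ge0.
by rewrite esum_geo mule1.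
Qed.
Lemma AL J n : (kk J <= n)%N ->
  exists2 M', is_matching A (alpha n) beta M' & msum (alpha n) beta M' <= (hh ^+ J)%:E.
Proof.
move=> kn.
have [m' Hm' lt'] := Wp_lt _ _ _ (rho_gt0 J)
  (HN J n (kk J) (leq_trans (N_le_kk J) kn) (N_le_kk J)).
pose Gm t := if t is t'.+1 then gam (t' + J) else alpha n.
pose MM t := if t is t'.+1 then m (t' + J) else m'.
have HMM : forall t, is_matching A (Gm t) (Gm t.+1) (MM t).
  by case => [|t] //=; exact: HMg.
have HT : forall t, msum (Gm t) (Gm t.+1) (MM t) <= Tt J t.
  by case => [|t] /=; [exact: ltW | exact: ltW (Hm (t + J)).2].
have MMs t s : MM (t + s.+1)%N = m (t + s + J)%N by rewrite addnS.
have Gms t s : Gm (t + s.+1)%N = gam (t + s + J)%N by rewrite addnS.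
pose pos (u : nat * nat) := match st m u.1 u.2 J with Alive j => j | Dead _ => 0%N end.
pose pre j := xget 0%N [set x | mK m' x /\ mphi m' x = j].
have preP j : (exists x, mK m' x /\ mphi m' x = j) -> mK m' (pre j) /\ mphi m' (pre j) = j.
  by move=> ex; apply: (@xgetPex _ 0%N [set x | mK m' x /\ mphi m' x = j]).
pose io (u : nat * nat) := if (J < u.1)%N then ((u.1 - J).+1, u.2)
  else if `[< exists x, mK m' x /\ mphi m' x = pos u >] then (0%N, pre (pos u))
  else (1%N, pos u).
pose iota c := io (dec c).
have posP u : alive_fw u -> (u.1 <= J)%N -> st m u.1 u.2 J = Alive (pos u).
  by move=> al uJ; have [j ej] := al J uJ; rewrite /pos ej.
have tail1 u v : (u.1 <= J)%N -> (v.1 <= 1)%N -> st m u.1 u.2 J = st MM v.1 v.2 1 ->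
    forall t, ptt gam m u (t + J) = ptt Gm MM v (t + 1).
  move=> uJ v1 e; apply: ptt_tail => // t; by rewrite addn1.
have H2 : forall y, fidx beta y -> birth Gm MM (iota y) /\
    converges_to d (ptt Gm MM (iota y)) (fpt beta y).
  move=> y [[b i] [-> Bo al nA]]; rewrite /iota /= dec_pickle.
  have cvL := HL _ Bo.
  rewrite /io /=; case: ltnP => [Jb|bJ].
    have [s es] : exists s, b = (s.+1 + J)%N by exists (b - J).-1; lia.
    subst b; rewrite addnK; split.
      case: Bo => /= fb [b0|nb]; first lia.
      by split => //; right.
    apply: (conv_tail _ _ _ (s.+1 + J)%N s.+2 _ cvL).
    apply: ptt_tail; [by [] | by [] | by move=> t; rewrite MMs addnA |
      by move=> t; rewrite Gms addnA | ].
    by rewrite (st_birth m (s.+1 + J)%N i) (st_birth MM s.+2 i).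
  have ep := posP _ al bJ.
  case: asboolP => ex.
    have [Kx ex'] := preP _ ex.
    split; first by split; [case: Hm' => + _ _ _ _; apply | left].
    apply: (conv_tail _ _ _ J 1 _ cvL).
    apply: tail1 => //=; rewrite ep /= asboolT //.
    by rewrite ex'.
  split.
    split; last by right => /= -[x Kx ex2]; apply: ex; exists x.
    exact: (@st_alive_fidx gam m HMg J b i (pos (b, i)) Bo ep).
  apply: (conv_tail _ _ _ J 1 _ cvL).
  by apply: tail1 => //=; rewrite ep.
have H1 : set_inj (fidx beta) iota.
  move=> y y' /set_mem [[b i] [-> Bo al nA]] /set_mem [[b' i'] [-> Bo' al' nA']].
  rewrite /iota !dec_pickle => e; congr pickle.
  move: e; rewrite /io /=.
  case: (ltnP J b) => Jb; case: (ltnP J b') => Jb'.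
  - by case => e1 ->; congr pair; lia.
  - by case: asboolP => _ [e1 _]; lia.
  - by case: asboolP => _ [e1 _]; lia.
  have ep := posP _ al Jb; have ep' := posP _ al' Jb'.
  move=> e.
  have epos : pos (b, i) = pos (b', i').
    move: e; case: asboolP => ex; case: asboolP => ex' /= -[e1] //.
    by rewrite -(preP _ ex).2 -(preP _ ex').2 e1.
  by apply: (@alive_unique gam m HMg J (b, i) (b', i') (pos (b, i))) => //; rewrite ep' -epos.
have H3 : forall x, fidx (Gm 0%N) x -> ~ (iota @` fidx beta) (0%N, x) ->
    (forall t, exists j, st MM 0 x t = Alive j) ->
    exists2 z, A z & converges_to d (ptt Gm MM (0%N, x)) z.
  move=> x fx nim alive.
  have [j1 e1] := alive 1%N.
  have Kx : mK m' x by move: e1 => /=; case: asboolP.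
  set j := mphi m' x.
  have e1' : st MM 0 x 1 = Alive j by rewrite /= asboolT.
  have fj : fidx (gam J) j by case: Hm' => _ + _ _ _; apply.
  have [u [Bu eu]] := @pos_birth gam m HMg J j fj.
  have uJ := @st_alive_ge m u.1 u.2 J j eu.
  have tl := @st_tail m MM u.1 u.2 J 0 x 1 uJ isT (fun t => congr1 MM (esym (addn1 t))) (etrans eu (esym e1')).
  have alu : alive_fw u.
    move=> t ut; case: (leqP J t) => Jt.
      have [j2 e2] := alive ((t - J) + 1)%N.
      by exists j2; rewrite -(subnK Jt) tl.
    case E: (st m u.1 u.2 t) => [j'|z]; first by exists j'.
    exfalso; have := @st_dead m u.1 u.2 t z ut E (J - t).
    by rewrite subnK ?eu //; exact: ltnW.
  have cvL := HL _ Bu.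
  exists (L u); last first.
    apply: (conv_tail _ _ _ J 1 _ cvL).
    apply: ptt_tail; [by [] | by [] | by move=> t; rewrite addn1 | by move=> t; rewrite addn1 |].
    by rewrite eu -e1'.
  apply: contrapT => nA; apply: nim.
  exists (pickle u); first by exists u.
  rewrite /iota dec_pickle /io ltnNge uJ /=.
  have pj : pos u = j by rewrite /pos eu.
  rewrite pj asboolT; last by exists x.
  have [Kp ep] := preP j (ex_intro _ x (conj Kx erefl)).
  congr pair.
  by case: Hm' => _ _ inj _ _; apply: inj; rewrite ?inE.
have [M' HM' Hle] := @GCL Gm MM HMM (Tt J) beta iota HT H1 H2 H3.
by exists M' => //; exact: le_trans Hle (bound_T J).
Qed.
End App.
End Met.

Theorem theorem6p9 (R : realType) (X : Type) (d : X -> X -> \bar R) (A : set X)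
  (p : R) :
  is_metric d -> closed_in d A -> (1 <= p)%R ->
  complete d ->
  forall alpha : nat -> fsum,
    (forall n, Dp d A p (alpha n)) ->
    cauchy_seq (Wp d A p) alpha ->
    exists2 beta : fsum, Dp d A p beta & converges_to (Wp d A p) alpha beta.
Proof.
move=> dm _ p1 Hc alpha HD Hcau.
have [N HN] : exists N : nat -> nat, forall j a b, (N j <= a)%N -> (N j <= b)%N ->
    Wp d A p (alpha a) (alpha b) < (rho j)%:E.
  have H j : exists Nj, forall a b, (Nj <= a)%N -> (Nj <= b)%N ->
      Wp d A p (alpha a) (alpha b) < (rho j)%:E by exact: Hcau _ (rho_gt0 j).
  by have [f hf] := boolp.choice H; exists f.
have [m Hm] := exists_m d A p p1 _ _ HN.
have [L HL] := exists_L _ _ _ dm p1 _ _ _ Hm Hc.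
exists (beta A alpha N m L).
  have [M' HM' Hle] := AL _ _ _ dm p1 _ _ HN _ Hm _ HL 0 _ (leqnn (kk N 0)).
  apply: (Dp_transfer _ _ _ dm p1 _ _ _ (HD (kk N 0)) (beta_Dbar A alpha N m L) HM').
  by apply: le_lt_trans Hle _; rewrite ltry.
move=> e e0.
have p0 : (0 < p)%R by apply: lt_le_trans p1.
have ep0 : (0 < e `^ p)%R by rewrite powR_gt0.
have [J hJ] := half_small _ ep0.
exists (kk N J) => n hn.
have [M' HM' Hle] := AL _ _ _ dm p1 _ _ HN _ Hm _ HL J _ hn.
apply: le_lt_trans (Wp_le _ _ _ _ _ _ HM') _.
apply: (@le_lt_trans _ _ (poweR ((hh ^+ J)%:E) p^-1)).
  apply: pwe_le => //; [by rewrite invr_ge0 ltW | exact: msum_ge0].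
rewrite poweR_EFin lte_fin.
have -> : e = ((e `^ p) `^ p^-1)%R.
  by rewrite -powRrM mulfV ?gt_eqF // powRr1 // ltW.
apply: gt0_ltr_powR; rewrite ?invr_gt0 ?nnegrE ?exprn_ge0 ?powR_ge0 //.
by rewrite /hh invr_ge0.
Qed.
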